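(* Let $M$ be a locally principally quasi-retractable right $R$-module with $S=\mathrm{End}_R(M)$. If $S$ is a left centrally AIP ring, then $M$ is a centrally endo-AIP module.
   Context: For $X\subseteq M$, $l_S(X)=\{\phi\in S:\phi(X)=0\}$; for $I\subseteq S$, $r_M(I)=\{m\in M: I m=0\}$, and for $T\subseteq S$, $l_S(T)=\{f\in S: fT=0\}$. $M$ is locally principally quasi-retractable if for every principal ideal $I$ of $S$ with $r_M(I)\neq 0$ there is a nonzero $\psi\in S$ with $r_M(I)=\psi(M)$. An ideal $J$ of $S$ is centrally s-unital if for every $a\in J$ there is $z\in J$ central in $S$ with $az=a$. $S$ is left centrally AIP if $l_S(T)$ is centrally s-unital for every ideal $T$ of $S$. $M$ is centrally endo-AIP if $l_S(N)$ is a centrally s-unital ideal of $S$ for every fully invariant submodule $N$ of $M$. *)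

(* Defs.v *)
From HB Require Import structures.
From mathcomp Require Import all_boot all_algebra.
Set Implicit Arguments. Unset Strict Implicit. Unset Printing Implicit Defensive.
Import GRing.Theory.
Local Open Scope ring_scope.

(* A right R-module M is modelled as a left module over the converse ring R^c.
   S = End_R(M) is the set of R-linear maps M -> M (predicate [endo]),
   acting on the left of M, with product in S = composition (f g = f \o g). *)

Section Defs.
Variable R : nzRingType.
Variable M : lmodType R^c.

Definition endo (f : M -> M) : Prop :=
  forall (a : R^c) (u v : M), f (a *: u + v) = a *: f u + f v.

Definition S_ideal (J : (M -> M) -> Prop) : Prop :=
  [/\ (forall f, J f -> endo f),
      J (fun _ => 0),
      (forall f g, J f -> J g -> J (fun m => f m - g m)),
      (forall s f, endo s -> J f -> J (s \o f)) &
      (forall s f, endo s -> J f -> J (f \o s))].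

Definition gen_ideal (a : M -> M) : (M -> M) -> Prop :=
  fun f => forall J, S_ideal J -> J a -> J f.

Definition principal_ideal (I : (M -> M) -> Prop) : Prop :=
  exists a, endo a /\ (forall f, I f <-> gen_ideal a f).

Definition r_M (I : (M -> M) -> Prop) : M -> Prop :=
  fun m => forall f, I f -> f m = 0.

Definition l_S_mod (X : M -> Prop) : (M -> M) -> Prop :=
  fun f => endo f /\ forall m, X m -> f m = 0.

Definition l_S_ring (T : (M -> M) -> Prop) : (M -> M) -> Prop :=
  fun f => endo f /\ forall g, T g -> forall m, f (g m) = 0.

Definition central (z : M -> M) : Prop :=
  endo z /\ forall s, endo s -> forall m, z (s m) = s (z m).

Definition centrally_s_unital (J : (M -> M) -> Prop) : Prop :=
  forall a, J a -> exists z, [/\ J z, central z & forall m, a (z m) = a m].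

Definition loc_princ_quasi_retractable : Prop :=
  forall I, principal_ideal I -> (exists m, r_M I m /\ m <> 0) ->
    exists psi, [/\ endo psi, (exists m, psi m <> 0) &
                    forall m, r_M I m <-> exists x, m = psi x].

Definition left_centrally_AIP : Prop :=
  forall T, S_ideal T -> centrally_s_unital (l_S_ring T).

Definition submodule (N : M -> Prop) : Prop :=
  [/\ N 0, (forall u v, N u -> N v -> N (u - v)) &
      (forall (a : R^c) u, N u -> N (a *: u))].

Definition fully_invariant (N : M -> Prop) : Prop :=
  submodule N /\ forall f m, endo f -> N m -> N (f m).

Definition centrally_endo_AIP : Prop :=
  forall N, fully_invariant N ->
    S_ideal (l_S_mod N) /\ centrally_s_unital (l_S_mod N).

End Defs.

(* Main.v *)
Require Import Defs.
From HB Require Import structures.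
From mathcomp Require Import all_boot all_algebra.
From Stdlib Require Import Classical.
Import GRing.Theory.
Local Open Scope ring_scope.
Set Implicit Arguments.

Section Aux.
Variable R : nzRingType.
Variable M : lmodType R^c.

Lemma endoD (f : M -> M) (u v : M) : endo f -> f (u + v) = f u + f v.
Proof. by move=> Hf; have := Hf 1 u v; rewrite !scale1r. Qed.

Lemma endo0 (f : M -> M) : endo f -> f 0 = 0.
Proof.
move=> Hf; have H := endoD 0 0 Hf; rewrite addr0 in H.
by apply: (addrI (f 0)); rewrite addr0 -H.
Qed.

Lemma endoB (f : M -> M) u v : endo f -> f (u - v) = f u - f v.
Proof.
move=> Hf; have := Hf (-1) v 0; rewrite addr0 (endo0 Hf) addr0 !scaleN1r => H.
by rewrite endoD // H.
Qed.

Lemma endo_comp (f g : M -> M) : endo f -> endo g -> endo (f \o g).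
Proof. by move=> Hf Hg a u v /=; rewrite Hg Hf. Qed.

Lemma endo_sub (f g : M -> M) : endo f -> endo g -> endo (fun m => f m - g m).
Proof.
by move=> Hf Hg a u v; rewrite Hf Hg scalerBr opprD addrACA.
Qed.

Lemma endo_zero : endo (fun _ : M => 0).
Proof. by move=> a u v; rewrite scaler0 addr0. Qed.

Lemma endo_id : endo (@id M).
Proof. by []. Qed.

Lemma endo_ideal : S_ideal (@endo R M).
Proof.
split=> //; [exact: endo_zero | exact: endo_sub | | ].
- by move=> s f Hs Hf; apply: endo_comp.
- by move=> s f Hs Hf; apply: endo_comp.
Qed.

Lemma gen_self (a : M -> M) : gen_ideal a a.
Proof. by move=> J _. Qed.

Lemma gen_endo (a f : M -> M) : endo a -> gen_ideal a f -> endo f.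
Proof. by move=> Ha Hf; apply: (Hf (@endo R M)) => //; exact: endo_ideal. Qed.

Lemma gen_compr (a f s : M -> M) : gen_ideal a f -> endo s -> gen_ideal a (f \o s).
Proof. by move=> Hf Hs J HJ Ja; case: (HJ) => _ _ _ _ H5; apply: H5 => //; apply: Hf. Qed.

End Aux.

Theorem proposition3p5 (R : nzRingType) (M : lmodType R^c) :
  loc_princ_quasi_retractable M -> left_centrally_AIP M -> centrally_endo_AIP M.
Proof.
move=> Hlpqr Haip N [[N0 NB NZ] NF].
have Hid : S_ideal (l_S_mod N).
  split.
  - by move=> f [].
  - by split; [exact: endo_zero | ].
  - move=> f g [Hf Hf0] [Hg Hg0]; split; first exact: endo_sub.
    by move=> m Nm; rewrite Hf0 // Hg0 // subr0.
  - move=> s f Hs [Hf Hf0]; split; first exact: endo_comp.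
    by move=> m Nm /=; rewrite Hf0 // endo0.
  - move=> s f Hs [Hf Hf0]; split; first exact: endo_comp.
    by move=> m Nm /=; rewrite Hf0 //; apply: NF.
split=> //.
move=> phi [Hphi Hphi0].
pose I := gen_ideal phi.
have NI : forall n, N n -> r_M I n.
  move=> n Nn f If; have [_ ->] := If _ Hid (conj Hphi Hphi0) => //.
destruct (classic (exists m, r_M I m /\ m <> 0)) as [Hex|Hno].
- have HP : principal_ideal I by exists phi; split.
  case: (Hlpqr I HP Hex) => psi [Hpsi _ Hrange].
  pose T := fun g : M -> M => endo g /\ forall m, r_M I (g m).
  have HT : S_ideal T.
    split.
    + by move=> f [].
    + split; first exact: endo_zero.
      by move=> m f If; rewrite endo0 //; apply: gen_endo If.
    + move=> f g [Hf Hf0] [Hg Hg0]; split; first exact: endo_sub.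
      move=> m f' If'; rewrite endoB; last exact: gen_endo If'.
      by rewrite Hf0 // Hg0 // subr0.
    + move=> s f Hs [Hf Hf0]; split; first exact: endo_comp.
      move=> m f' If' /=.
      exact: (Hf0 m (f' \o s) (gen_compr If' Hs)).
    + move=> s f Hs [Hf Hf0]; split; first exact: endo_comp.
      by move=> m f' If'; exact: (Hf0 (s m) f' If').
  have phiT : l_S_ring T phi.
    split=> // g [Hg Hg0] m; exact: (Hg0 m phi (gen_self phi)).
  case: (Haip T HT phi phiT) => z [[Hz Hz0] Hzc Hza].
  exists z; split=> //; split=> // m Nm.
  have [x ->] := (Hrange m).1 (NI m Nm).
  apply: Hz0; split=> // y; apply/Hrange; by exists y.
- exists (fun m : M => m); split=> //.
  split; first by move=> ? ? ?.
  move=> m Nm /=; apply: NNPP => Hm; apply: Hno; exists m; split=> //.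
  exact: NI.
Qed.
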